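(* (1) There exist a hedonic diversity game in which all agents have strict preferences and an initial partition $\pi_0$ such that no finite sequence of IS deviations starting from $\pi_0$ ends in an individually stable partition. (2) The same holds for some hedonic diversity game in which all agents have naturally single-peaked preferences (with indifferences allowed) and some initial partition.
   Context: A hedonic diversity game (HDG) has agent set $N=R\cup B$ partitioned into red agents $R$ and blue agents $B$, $|N|=n$. Each agent $i$ has a weak order $\succsim_i^F$ over fractions $\{p/q: p\in\{0,\dots,|R|\},q\in[n]\}$, and evaluates a coalition $C\ni i$ by the fraction $|R\cap C|/|C|$. Strict: the orders are linear. Naturally single-peaked: for each agent $i$ and fractions $x,y,z$ with $x>y>z$ or $z>y>x$, $x\succ_i^F y$ implies $y\succsim_i^F z$. An IS deviation of agent $i$ from partition $\pi$ to $\pi'$ is a move of $i$ alone from $\pi(i)$ into another coalition of $\pi$ or into a new singleton such that $\pi'(i)\succ_i\pi(i)$ and $\pi'(j)\succsim_j\pi(j)$ for all $j\in\pi'(i)\setminus\{i\}$. A partition is individually stable (IS) if no IS deviation is possible from it. *)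

(* Defs.v *)
From mathcomp Require Import all_boot all_order all_algebra.
Set Implicit Arguments. Unset Strict Implicit. Unset Printing Implicit Defensive.
Import Order.TTheory GRing.Theory Num.Theory.
Local Open Scope ring_scope.

(* Agents are 'I_n; [red i] says agent i is red (otherwise blue).
   [pref i x y] means agent i weakly prefers fraction x to fraction y. *)

Definition nred (n : nat) (red : 'I_n -> bool) : nat := #|[set i | red i]|.

Definition is_frac (n : nat) (red : 'I_n -> bool) (x : rat) : Prop :=
  exists p q : nat, (p <= nred red)%N /\ (1 <= q <= n)%N /\ x = p%:R / q%:R.

Definition weak_order_on (F : rat -> Prop) (r : rat -> rat -> bool) : Prop :=
  (forall x y, F x -> F y -> r x y || r y x) /\
  (forall x y z, F x -> F y -> F z -> r x y -> r y z -> r x z).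

Definition strict_pref (r : rat -> rat -> bool) (x y : rat) : bool :=
  r x y && ~~ r y x.

Definition linear_on (F : rat -> Prop) (r : rat -> rat -> bool) : Prop :=
  weak_order_on F r /\ (forall x y, F x -> F y -> r x y -> r y x -> x = y).

Definition nat_single_peaked_on (F : rat -> Prop) (r : rat -> rat -> bool) : Prop :=
  forall x y z, F x -> F y -> F z ->
    ((x > y) && (y > z) || (z > y) && (y > x)) ->
    strict_pref r x y -> r y z.

Definition HDG (n : nat) (red : 'I_n -> bool) (pref : 'I_n -> rat -> rat -> bool) : Prop :=
  forall i, weak_order_on (is_frac red) (pref i).

Definition strict_HDG n (red : 'I_n -> bool) (pref : 'I_n -> rat -> rat -> bool) : Prop :=
  forall i, linear_on (is_frac red) (pref i).

Definition nsp_HDG n (red : 'I_n -> bool) (pref : 'I_n -> rat -> rat -> bool) : Prop :=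
  HDG red pref /\ forall i, nat_single_peaked_on (is_frac red) (pref i).

Definition red_frac n (red : 'I_n -> bool) (C : {set 'I_n}) : rat :=
  (#|[set j in C | red j]|)%:R / (#|C|)%:R.

(* partition obtained when agent i leaves its coalition and joins T
   (T = set0 means: forms a new singleton coalition) *)
Definition move_agent n (P : {set {set 'I_n}}) (i : 'I_n) (T : {set 'I_n})
  : {set {set 'I_n}} :=
  let S := pblock P i in
  ((P :\ S :\ T) :|: [set i |: T]) :|:
  (if S :\ i == set0 then set0 else [set S :\ i]).

Definition IS_deviation n (red : 'I_n -> bool) (pref : 'I_n -> rat -> rat -> bool) (P P' : {set {set 'I_n}}) : Prop :=
  exists (i : 'I_n) (T : {set 'I_n}),
    (T == set0 \/ (T \in P /\ T != pblock P i)) /\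
    strict_pref (pref i) (red_frac red (i |: T)) (red_frac red (pblock P i)) /\
    (forall j, j \in T -> pref j (red_frac red (i |: T)) (red_frac red T)) /\
    P' = move_agent P i T.

Definition individually_stable n (red : 'I_n -> bool) (pref : 'I_n -> rat -> rat -> bool) (P : {set {set 'I_n}}) : Prop :=
  forall P', ~ IS_deviation red pref P P'.

Inductive IS_reachable n (red : 'I_n -> bool) (pref : 'I_n -> rat -> rat -> bool) (P : {set {set 'I_n}})
  : {set {set 'I_n}} -> Prop :=
| IS_reach_refl : IS_reachable red pref P P
| IS_reach_step P1 P2 : IS_reachable red pref P P1 ->
    IS_deviation red pref P1 P2 -> IS_reachable red pref P P2.

(* Main.v *)
Require Import Defs.
From mathcomp Require Import all_boot all_order all_algebra.
From mathcomp Require Import zify.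
Set Implicit Arguments. Unset Strict Implicit. Unset Printing Implicit Defensive.
Import Order.TTheory GRing.Theory Num.Theory.
Local Open Scope ring_scope.


Definition mk {n} (l : seq nat) : {set 'I_n} := [set i : 'I_n | (val i \in l)].

Lemma in_mk n (l : seq nat) (i : 'I_n) : (i \in mk l) = (val i \in l).
Proof. by rewrite inE. Qed.

Definition eqC n (l1 l2 : seq nat) := all (fun k => (k \in l1) == (k \in l2)) (iota 0 n).

Lemma eqCP n (l1 l2 : seq nat) : reflect (mk l1 = mk l2 :> {set 'I_n}) (eqC n l1 l2).
Proof.
apply: (iffP allP) => [h|h k].
- apply/setP => i; rewrite !in_mk; apply/eqP; apply: h; by rewrite mem_iota /= ltn_ord.
- rewrite mem_iota /= add0n => kn; have := congr1 (fun A : {set 'I_n} => Ordinal kn \in A) h.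
  by rewrite !in_mk /= => ->.
Qed.

Lemma card_mkq n (q : pred nat) : #|[set i : 'I_n | q (val i)]| = count q (iota 0 n).
Proof.
have -> : #|[set i : 'I_n | q (val i)]| = #|[seq i <- enum 'I_n | q (val i)]|.
  by apply: eq_card => i; rewrite inE mem_filter mem_enum andbT.
move/card_uniqP: (filter_uniq (fun i : 'I_n => q (val i)) (enum_uniq 'I_n)) => ->.
by rewrite size_filter -(count_map val q) val_enum_ord.
Qed.

Definition fracC n (redN : pred nat) (l : seq nat) : rat :=
  (count (fun k => (k \in l) && redN k) (iota 0 n))%:R / (count (fun k => k \in l) (iota 0 n))%:R.

Lemma red_frac_mk n (redN : pred nat) (l : seq nat) :
  red_frac (fun i : 'I_n => redN (val i)) (mk l) = fracC n redN l.
Proof.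
rewrite /red_frac /fracC.
have -> : [set j in mk l | redN (val j)] = [set i : 'I_n | (fun k => (k \in l) && redN k) (val i)].
  by apply/setP => i; rewrite !inE.
rewrite card_mkq; congr (_%:R / _%:R); exact: (@card_mkq n (fun k => (k \in l) && redN k)).
Qed.

Lemma setU1_mk n (i : 'I_n) t : i |: mk t = mk (val i :: t).
Proof. by apply/setP => x; rewrite !inE. Qed.

Lemma setD1_mk n (i : 'I_n) S : mk S :\ i = mk [seq k <- S | k != val i].
Proof. by apply/setP => x; rewrite !inE mem_filter andbC. Qed.

Lemma set0_mk n : set0 = mk [::] :> {set 'I_n}.
Proof. by apply/setP => x; rewrite !inE. Qed.

Definition blkC (L : seq (seq nat)) (k : nat) := nth [::] L (find (fun l => k \in l) L).

Definition wfC n (L : seq (seq nat)) :=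
  all (fun k => has (fun l => k \in l) L && all (fun l => (k \in l) ==> eqC n l (blkC L k)) L)
    (iota 0 n).

Definition toP {n} (L : seq (seq nat)) : {set {set 'I_n}} := [set B | B \in map mk L].

Lemma in_toP n (L : seq (seq nat)) (B : {set 'I_n}) : (B \in toP L) = (B \in map mk L).
Proof. by rewrite inE. Qed.

Lemma wfCP n (L : seq (seq nat)) (i : 'I_n) : wfC n L ->
  [/\ blkC L (val i) \in L, val i \in blkC L (val i) &
      forall l, l \in L -> val i \in l -> mk l = mk (blkC L (val i)) :> {set 'I_n}].
Proof.
move=> /allP /(_ (val i)); rewrite mem_iota /= ltn_ord => /(_ isT) /andP [hh /allP ha]; split.
- by rewrite /blkC mem_nth // -has_find.
- exact: (nth_find [::] hh).
- by move=> l lL il; apply/eqCP; move: (ha l lL); rewrite il.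
Qed.

Lemma pblock_toP n (L : seq (seq nat)) (i : 'I_n) : wfC n L ->
  pblock (toP L) i = mk (blkC L (val i)).
Proof.
move=> /(wfCP i) [h1 h2 h3]; rewrite /pblock; case: pickP => [B /= /andP [BP iB] | /(_ (mk (blkC L (val i))))] /=.
- rewrite in_toP in BP; case/mapP: BP => l lL El; subst B.
  by rewrite in_mk in iB; rewrite (h3 l).
- by rewrite in_toP map_f // in_mk h2.
Qed.

Lemma partition_toP n (L : seq (seq nat)) : wfC n L -> all (fun l => ~~ eqC n l [::]) L ->
  partition (toP L) [set: 'I_n].
Proof.
move=> w /allP n0; apply/and3P; split.
- apply/eqP/setP => x; rewrite inE; apply/bigcupP.
  have [h1 h2 _] := wfCP x w; exists (mk (blkC L (val x))); last by rewrite in_mk.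
  by rewrite in_toP map_f.
- apply/trivIsetP => A B; rewrite !in_toP => /mapP [a aL ->] /mapP [b bL ->] neq.
  rewrite -setI_eq0; apply/eqP/setP => x; rewrite !inE; apply/negP => /andP [xA xB].
  have [_ _ h3] := wfCP x w; apply: (negP neq); by rewrite (h3 _ aL xA) (h3 _ bL xB).
- rewrite in_toP; apply/mapP => -[l lL]; rewrite set0_mk => /esym /eqCP e.
  by move: (n0 l lL); rewrite e.
Qed.

Definition mvlC n (L : seq (seq nat)) (i : nat) (t : seq nat) :=
  let S := blkC L i in
  [seq l <- L | ~~ eqC n l S && ~~ eqC n l t] ++ (i :: t) ::
    (if eqC n [seq k <- S | k != i] [::] then [::] else [:: [seq k <- S | k != i]]).

Lemma mem_map_filter n (L : seq (seq nat)) S t (B : {set 'I_n}) :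
  (B \in map mk [seq l <- L | ~~ eqC n l S && ~~ eqC n l t]) =
  [&& B != mk t, B != mk S & B \in map mk L].
Proof.
apply/mapP/idP => [[l] |].
- rewrite mem_filter => /andP [/andP [h1 h2] lL] ->.
  rewrite map_f // andbT; apply/andP; split; apply/negP => /eqP /eqCP; by apply/negP.
- case/and3P => h1 h2 /mapP [l lL El]; exists l => //; rewrite mem_filter lL andbT.
  by apply/andP; split; apply/negP => /eqCP e; [move: h2 | move: h1]; rewrite El e eqxx.
Qed.

Lemma move_toP n (L : seq (seq nat)) (i : 'I_n) t : wfC n L ->
  move_agent (toP L) i (mk t) = toP (mvlC n L (val i) t).
Proof.
move=> w; rewrite /move_agent pblock_toP //; apply/setP => B.
rewrite /mvlC !inE map_cat mem_cat mem_map_filter /= in_cons setU1_mk setD1_mk.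
have -> : (mk [seq k <- blkC L (val i) | k != val i] == set0 :> {set 'I_n}) =
          eqC n [seq k <- blkC L (val i) | k != val i] [::].
  by rewrite set0_mk; apply/eqP/eqCP.
case: ifP => _; rewrite ?inE ?in_nil ?orbF ?orbA //=.
Qed.

Definition seteqC n (L1 L2 : seq (seq nat)) :=
  all (fun l => has (eqC n l) L2) L1 && all (fun l => has (eqC n l) L1) L2.

Lemma toP_eq n (L1 L2 : seq (seq nat)) : seteqC n L1 L2 -> toP L1 = toP L2 :> {set {set 'I_n}}.
Proof.
case/andP => /allP h1 /allP h2; apply/setP => B; rewrite !in_toP.
apply/mapP/mapP => -[l lL ->].
- by case/hasP: (h1 l lL) => l' l'L /eqCP e; exists l'.
- by case/hasP: (h2 l lL) => l' l'L /eqCP e; exists l'.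
Qed.

Definition devbC n (redN : pred nat) (prefN : nat -> rat -> rat -> bool)
  (L : seq (seq nat)) (i : nat) (t : seq nat) :=
  let nf := fracC n redN (i :: t) in
  strict_pref (prefN i) nf (fracC n redN (blkC L i)) &&
  all (fun k => (k \in t) ==> prefN k nf (fracC n redN t)) (iota 0 n).

Definition closedC n redN prefN (fam : seq (seq (seq nat))) :=
  all (fun L => wfC n L && all (fun i => all (fun t => devbC n redN prefN L i t ==>
        has (seteqC n (mvlC n L i t)) fam) ([::] :: L)) (iota 0 n)) fam.

Definition unstableC n redN prefN (fam : seq (seq (seq nat))) :=
  all (fun L => has (fun i => has (fun t => devbC n redN prefN L i t &&
        (eqC n t [::] || ~~ eqC n t (blkC L i))) ([::] :: L)) (iota 0 n)) fam.

Lemma reach_famC n redN prefN fam L0 P :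
  closedC n redN prefN fam -> L0 \in fam ->
  IS_reachable (fun i : 'I_n => redN (val i)) (fun i : 'I_n => prefN (val i)) (toP L0) P ->
  exists2 L, L \in fam & P = toP L.
Proof.
move=> /allP cl L0f; elim => [|P1 P2 _ [L Lf ->] [i [T [hT [hs [hc ->]]]]]].
  by exists L0.
have /andP [w /allP hi] := cl L Lf.
have hv : val i \in iota 0 n by rewrite mem_iota leq0n add0n ltn_ord.
have /allP hT' := hi (val i) hv.
have [t tL ET] : exists2 t, t \in [::] :: L & T = mk t.
  case: hT => [/eqP -> | [TP _]]; first by exists [::]; rewrite ?inE ?eqxx // set0_mk.
  rewrite in_toP in TP; case/mapP: TP => l lL ->; exists l => //; by rewrite inE lL orbT.
subst T.
rewrite setU1_mk (pblock_toP i w) !red_frac_mk in hs.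
have hc' : all (fun k => (k \in t) ==> prefN k (fracC n redN (val i :: t)) (fracC n redN t)) (iota 0 n).
  apply/allP => k; rewrite mem_iota /= add0n => kn; apply/implyP => kt.
  have := hc (Ordinal kn); rewrite in_mk /= setU1_mk !red_frac_mk; by move/(_ kt).
have := hT' t tL; rewrite /devbC /= hs hc' /= => /hasP [L' L'f eqb].
exists L' => //; rewrite move_toP //; exact: toP_eq.
Qed.

Lemma unstable_famC n redN prefN fam L :
  closedC n redN prefN fam -> unstableC n redN prefN fam -> L \in fam ->
  ~ individually_stable (fun i : 'I_n => redN (val i)) (fun i : 'I_n => prefN (val i)) (toP L).
Proof.
move=> /allP cl /allP us Lf IS.
have /andP [w _] := cl L Lf.
have /hasP [k kI /hasP [t tL /andP [d h]]] := us L Lf.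
move: kI; rewrite mem_iota /= add0n => kn.
apply: (IS (move_agent (toP L) (Ordinal kn) (mk t))); exists (Ordinal kn), (mk t).
split; [|split; [|split]] => //.
- move: tL; rewrite inE => /orP [/eqP -> | tL]; first by left; rewrite -set0_mk.
  case/orP: h => [/eqCP e | ne]; first by left; rewrite e -set0_mk.
  right; split; first by rewrite in_toP map_f.
  rewrite (pblock_toP _ w); apply/negP => /eqP /eqCP; exact/negP.
- move: d; rewrite /devbC /= => /andP [hs _].
  by rewrite setU1_mk (pblock_toP _ w) !red_frac_mk.
- move=> j; rewrite in_mk => jt; move: d; rewrite /devbC /= => /andP [_ /allP /(_ (val j))].
  rewrite mem_iota /= add0n ltn_ord jt setU1_mk !red_frac_mk => /(_ isT); exact.
Qed.

Lemma main_genC n redN prefN fam L0 :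
  closedC n redN prefN fam -> unstableC n redN prefN fam -> L0 \in fam ->
  forall P, IS_reachable (fun i : 'I_n => redN (val i)) (fun i : 'I_n => prefN (val i)) (toP L0) P ->
  ~ individually_stable (fun i : 'I_n => redN (val i)) (fun i : 'I_n => prefN (val i)) P.
Proof.
move=> cl us L0f P /(reach_famC cl L0f) [L Lf ->]; exact: (unstable_famC cl us Lf).
Qed.


Definition lexp (k : rat -> nat) (x y : rat) : bool :=
  (k x < k y)%N || ((k x == k y) && (x <= y)).

Lemma lexp_linear k (F : rat -> Prop) : linear_on F (lexp k).
Proof.
split; [split|].
- move=> x y _ _; rewrite /lexp.
  case: (ltngtP (k x) (k y)) => /= h; rewrite ?h ?eqxx ?le_total // ?orbT.
- move=> x y z _ _ _; rewrite /lexp.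
  case/orP => [h1|/andP [/eqP e1 h1]]; case/orP => [h2|/andP [/eqP e2 h2]].
  + by rewrite (ltn_trans h1 h2).
  + by rewrite -e2 h1.
  + by rewrite e1 h2.
  + by rewrite e1 e2 eqxx (le_trans h1 h2) orbT.
- move=> x y _ _; rewrite /lexp.
  case/orP => [h1|/andP [/eqP e1 h1]]; case/orP => [h2|/andP [/eqP e2 h2]].
  + by move: (ltn_trans h1 h2); rewrite ltnn.
  + by move: h1; rewrite e2 ltnn.
  + by move: h2; rewrite e1 ltnn.
  + by apply/le_anti; rewrite h1 h2.
Qed.

Definition cnt (L : seq rat) (x : rat) : int := (count (fun t => t <= x) L)%:Z.
Definition spu (L1 L2 : seq rat) (x : rat) : int := cnt L1 x - cnt L2 x.
Definition sppref (L1 L2 : seq rat) (x y : rat) : bool := spu L1 L2 y <= spu L1 L2 x.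

Lemma cnt_mono L x y : x <= y -> cnt L x <= cnt L y.
Proof.
move=> xy; rewrite /cnt lez_nat; apply: sub_count => t /= tx; exact: le_trans tx xy.
Qed.

Lemma cnt_full L x : (forall t, t \in L -> t <= x) -> cnt L x = (size L)%:Z.
Proof.
move=> h; rewrite /cnt; congr Posz; apply/eqP; rewrite -all_count; apply/allP => t tL; exact: h.
Qed.

Lemma cnt_zero L x : (forall t, t \in L -> ~~ (t <= x)) -> cnt L x = 0.
Proof.
move=> h; rewrite /cnt; congr Posz; apply/eqP; rewrite -leqn0 leqNgt -has_count; apply/hasP => -[t tL tx].
by move: (h t tL); rewrite tx.
Qed.

Lemma sp_weak L1 L2 (F : rat -> Prop) : weak_order_on F (sppref L1 L2).
Proof.
split.
- by move=> x y _ _; rewrite /sppref le_total.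
- move=> x y z _ _ _; rewrite /sppref => h1 h2; exact: le_trans h2 h1.
Qed.

Lemma sp_nsp L1 L2 (F : rat -> Prop) : all (fun a => all (fun b => a <= b) L2) L1 ->
  nat_single_peaked_on F (sppref L1 L2).
Proof.
move=> /allP hL x y z _ _ _ hxyz; rewrite /strict_pref /sppref /spu => /andP [h1 h2].
have hlt : cnt L1 y - cnt L2 y < cnt L1 x - cnt L2 x by rewrite ltNge.
case: (boolP (has (fun t => t <= y) L2)) => [/hasP [b bL bly] | hn].
- have full : forall w, y <= w -> cnt L1 w = (size L1)%:Z.
    move=> w yw; apply: cnt_full => t tL.
    have := allP (hL t tL) b bL; move=> tb; exact: le_trans tb (le_trans bly yw).
  case/orP: hxyz => /andP [a1 a2].
  + exfalso; have := cnt_mono L2 (ltW a1).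
    rewrite (full x (ltW a1)) (full y (lexx y)) in hlt. lia.
  + have := cnt_mono L2 (ltW a1); rewrite (full z (ltW a1)) (full y (lexx y)). lia.
- have zero : forall w, w <= y -> cnt L2 w = 0.
    move=> w wy; apply: cnt_zero => t tL; apply/negP => tw.
    by move/hasP: hn; apply; exists t => //; exact: le_trans tw wy.
  case/orP: hxyz => /andP [a1 a2].
  + have := cnt_mono L1 (ltW a2); rewrite (zero z (ltW a2)) (zero y (lexx y)). lia.
  + exfalso; have := cnt_mono L1 (ltW a2).
    rewrite (zero x (ltW a2)) (zero y (lexx y)) in hlt. lia.
Qed.


Definition fr (p q : nat) : rat := p%:R / q%:R.

Local Open Scope nat_scope.
Definition redS (k : nat) : bool := (k < 4)%N.
Definition rkS (k : nat) : seq rat :=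
  match k with
  | 0 => [:: fr 1 3; fr 1 2; fr 1 1; fr 4 7; fr 0 1; fr 3 5; fr 3 4; fr 1 6; fr 2 5; fr 3 7; fr 4 5; fr 2 3; fr 3 8; fr 1 8; fr 1 4; fr 2 7; fr 1 7; fr 1 5]
  | 1 => [:: fr 1 5; fr 1 4; fr 1 3; fr 4 5; fr 3 4; fr 3 5; fr 1 8; fr 2 7; fr 2 5; fr 1 2; fr 2 3; fr 0 1; fr 3 7; fr 3 8; fr 4 7; fr 1 7; fr 1 6; fr 1 1]
  | 2 => [:: fr 2 3; fr 1 1; fr 1 7; fr 2 7; fr 0 1; fr 3 7; fr 1 3; fr 1 6; fr 3 4; fr 1 4; fr 2 5; fr 4 7; fr 1 2; fr 3 5; fr 4 5; fr 1 8; fr 3 8; fr 1 5]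
  | 3 => [:: fr 2 3; fr 1 1; fr 1 4; fr 0 1; fr 2 7; fr 4 7; fr 1 8; fr 1 7; fr 3 4; fr 3 5; fr 4 5; fr 1 5; fr 1 3; fr 1 6; fr 1 2; fr 3 8; fr 3 7; fr 2 5]
  | 4 => [:: fr 1 5; fr 1 4; fr 1 3; fr 3 7; fr 1 8; fr 4 5; fr 1 1; fr 1 7; fr 3 4; fr 1 6; fr 3 5; fr 2 3; fr 4 7; fr 1 2; fr 2 5; fr 2 7; fr 3 8; fr 0 1]
  | 5 => [:: fr 1 5; fr 1 4; fr 1 3; fr 1 6; fr 3 8; fr 2 5; fr 2 3; fr 4 5; fr 3 7; fr 4 7; fr 1 1; fr 1 2; fr 1 7; fr 2 7; fr 1 8; fr 3 5; fr 3 4; fr 0 1]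
  | 6 => [:: fr 1 5; fr 1 1; fr 2 3; fr 1 3; fr 1 2; fr 1 4; fr 2 7; fr 2 5; fr 3 8; fr 3 5; fr 1 8; fr 3 7; fr 1 6; fr 3 4; fr 4 7; fr 4 5; fr 1 7; fr 0 1]
  | _ => [:: fr 1 3; fr 2 3; fr 1 5; fr 1 4; fr 1 1; fr 1 2; fr 4 5; fr 1 6; fr 3 8; fr 1 8; fr 1 7; fr 3 7; fr 3 5; fr 2 5; fr 4 7; fr 3 4; fr 2 7; fr 0 1]
  end.
Definition prefS (k : nat) : rat -> rat -> bool := lexp (fun x => index x (rkS k)).

Definition famS : seq (seq (seq nat)) :=
  [:: [:: [:: 2;3]; [:: 1;4;5]; [:: 0;6;7]];
      [:: [:: 1;4;5]; [:: 2;3;6]; [:: 0;7]];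
      [:: [:: 0]; [:: 2;3;6]; [:: 1;4;5;7]];
      [:: [:: 0]; [:: 2;3]; [:: 1;4;5;6;7]];
      [:: [:: 0]; [:: 1;4;5;6]; [:: 2;3;7]];
      [:: [:: 1;4;5]; [:: 0;6]; [:: 2;3;7]]].

Local Open Scope ring_scope.
Lemma closedS : closedC 8 redS prefS famS.
Proof. vm_compute. reflexivity. Qed.
Lemma unstableS : unstableC 8 redS prefS famS.
Proof. vm_compute. reflexivity. Qed.

Local Open Scope nat_scope.
Definition redN (k : nat) : bool := (k < 3)%N.
Definition L1N (k : nat) : seq rat :=
  if k == 2 then [:: fr 1 5; fr 1 3; fr 2 5; fr 1 2; fr 2 3]
  else if k == 8 then nseq 10 (fr 1 9) else [::].
Definition L2N (k : nat) : seq rat :=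
  if k == 2 then nseq 10 (fr 1 1)
  else if k == 8 then [:: fr 1 4; fr 1 3; fr 1 1] else [::].
Definition prefN (k : nat) : rat -> rat -> bool := sppref (L1N k) (L2N k).
Definition famN : seq (seq (seq nat)) :=
  [:: [:: [:: 1]; [:: 0;2;3;4]; [:: 5;6;7;8]];
      [:: [:: 0;2;3;4]; [:: 5;6;7]; [:: 1;8]];
      [:: [:: 0;3;4]; [:: 5;6;7]; [:: 1;2;8]];
      [:: [:: 1;2]; [:: 5;6;7]; [:: 0;3;4;8]];
      [:: [:: 1]; [:: 2;5;6;7]; [:: 0;3;4;8]];
      [:: [:: 1]; [:: 0;3;4]; [:: 2;5;6;7;8]]].
Local Open Scope ring_scope.
Lemma closedN : closedC 9 redN prefN famN.
Proof. vm_compute. reflexivity. Qed.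
Lemma unstableN : unstableC 9 redN prefN famN.
Proof. vm_compute. reflexivity. Qed.
Lemma LN_ok k : all (fun a => all (fun b => a <= b) (L2N k)) (L1N k).
Proof.
rewrite /L1N /L2N; case: (k == 2); first by vm_compute; reflexivity.
case: (k == 8); first by vm_compute; reflexivity.
by [].
Qed.
Lemma wfS0 : wfC 8 (head [::] famS) && all (fun l => ~~ eqC 8 l [::]) (head [::] famS).
Proof. vm_compute. reflexivity. Qed.
Lemma wfN0 : wfC 9 (head [::] famN) && all (fun l => ~~ eqC 9 l [::]) (head [::] famN).
Proof. vm_compute. reflexivity. Qed.

Theorem proposition4p3 :
  (exists (n : nat) (red : 'I_n -> bool) (pref : 'I_n -> rat -> rat -> bool)
          (P0 : {set {set 'I_n}}),
     strict_HDG red pref /\ partition P0 [set: 'I_n] /\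
     forall P, IS_reachable red pref P0 P -> ~ individually_stable red pref P) /\
  (exists (n : nat) (red : 'I_n -> bool) (pref : 'I_n -> rat -> rat -> bool)
          (P0 : {set {set 'I_n}}),
     nsp_HDG red pref /\ partition P0 [set: 'I_n] /\
     forall P, IS_reachable red pref P0 P -> ~ individually_stable red pref P).
Proof.
split.
- exists 8%N, (fun i : 'I_8 => redS (val i)), (fun i : 'I_8 => prefS (val i)),
    (toP (head [::] famS)).
  split; [|split].
  + move=> i; exact: lexp_linear.
  + by case/andP: wfS0 => w ne; apply: partition_toP.
  + apply: (main_genC closedS unstableS); exact: mem_head.
- exists 9%N, (fun i : 'I_9 => redN (val i)), (fun i : 'I_9 => prefN (val i)),
    (toP (head [::] famN)).
  split; [|split].
  + split; move=> i; [exact: sp_weak | apply: sp_nsp; exact: LN_ok].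
  + by case/andP: wfN0 => w ne; apply: partition_toP.
  + apply: (main_genC closedN unstableN); exact: mem_head.
Qed.
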